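(* Let $d \geq 2$ be an integer and let $Z, U$ be independent random variables with $Z \sim N(0,1)$ and $U \sim \chi^2_d$ (chi-squared with $d$ degrees of freedom). Then for all $\delta > 0$, $p > 0$ and all integers $k \geq 1$, $$\frac{1}{2}\, \mathbb{P}\left( \tfrac{1}{4} Z^2 \geq U \geq \delta^2 \right) k^{-d/p} \;\leq\; \mathbb{P}\left( \delta + \sqrt{U}\sqrt{k^{2/p} - 1} < Z \right) \;\leq\; \frac{ e^{-(1+\delta^2)/2}\, p }{ 2\delta^2 \sqrt{d} } \cdot \frac{ k^{(1-d)/p} }{ \ln k },$$ where for $k=1$ the right-hand side is interpreted as $+\infty$. *)

(* Defs.v *)
From Stdlib Require Import Reals Lra ClassicalEpsilon ClassicalDescription.
Open Scope R_scope.

Definition ind (P : Prop) : R :=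
  if excluded_middle_informative P then 1 else 0.

Definition is_int_R (f : R -> R) (l : R) : Prop :=
  (forall a b, a <= b -> inhabited (Riemann_integrable f a b)) /\
  (forall eps, 0 < eps -> exists M, 0 < M /\
     forall a b (pr : Riemann_integrable f a b),
       a <= - M -> M <= b -> Rabs (RiemannInt pr - l) < eps).

Definition is_int_pos (f : R -> R) (l : R) : Prop :=
  (forall b, 0 <= b -> inhabited (Riemann_integrable f 0 b)) /\
  (forall eps, 0 < eps -> exists M, 0 < M /\
     forall b (pr : Riemann_integrable f 0 b),
       M <= b -> Rabs (RiemannInt pr - l) < eps).

Definition phi (z : R) : R := exp (- z ^ 2 / 2) / sqrt (2 * PI).

(* Unnormalized chi-squared density with d degrees of freedom on u >= 0:
   u^(d/2 - 1) e^(-u/2), written as (sqrt u)^(d-2) for d >= 2.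
   The normalizing constant 2^(d/2) Gamma(d/2) is taken to be its integral. *)
Definition chisq_unnorm (d : nat) (u : R) : R :=
  sqrt u ^ (d - 2) * exp (- u / 2).

(* is_prob d A l : for independent Z ~ N(0,1) and U ~ chi^2_d,
   P(A Z U) = l, computed as
   (1/N) * int_0^oo chisq_unnorm d u * (int_R phi z * 1_{A z u} dz) du,
   with N = int_0^oo chisq_unnorm d. *)
Definition is_prob (d : nat) (A : R -> R -> Prop) (l : R) : Prop :=
  exists (N : R) (h : R -> R) (I : R),
    is_int_pos (chisq_unnorm d) N /\ 0 < N /\
    (forall u, 0 <= u -> is_int_R (fun z => phi z * ind (A z u)) (h u)) /\
    is_int_pos (fun u => chisq_unnorm d u * h u) I /\
    l = I / N.

(* Main.v *)
Require Import Defs.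
From Stdlib Require Import Reals Lra Lia Psatz ClassicalEpsilon ClassicalDescription FunctionalExtensionality.
From Coquelicot Require Import Coquelicot.
Open Scope R_scope.

Lemma c_mult (f g : R -> R) x : continuous f x -> continuous g x -> continuous (fun y => f y * g y) x.
Proof. intros; apply (continuous_mult f g x); auto. Qed.
Lemma c_plus (f g : R -> R) x : continuous f x -> continuous g x -> continuous (fun y => f y + g y) x.
Proof. intros; apply (continuous_plus f g x); auto. Qed.
Lemma c_const (c x : R) : continuous (fun _ : R => c) x.
Proof. apply continuous_const. Qed.
Lemma c_id (x : R) : continuous (fun y : R => y) x.
Proof. apply continuous_id. Qed.
Lemma c_opp (f : R -> R) x : continuous f x -> continuous (fun y => - f y) x.
Proof. intros; apply (continuous_opp f x); auto. Qed.
Lemma c_pow (f : R -> R) x n : continuous f x -> continuous (fun y => f y ^ n) x.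
Proof. intros H; induction n; simpl. apply c_const. apply c_mult; auto. Qed.
Lemma c_exp (f : R -> R) x : continuous f x -> continuous (fun y => exp (f y)) x.
Proof. apply continuous_exp_comp. Qed.
Lemma c_sqrt (f : R -> R) x : continuous f x -> continuous (fun y => sqrt (f y)) x.
Proof. apply continuous_sqrt_comp. Qed.
Lemma c_comp (f g : R -> R) x : continuous f x -> continuous g (f x) -> continuous (fun y => g (f y)) x.
Proof. intros; apply (continuous_comp f g x); auto. Qed.
Lemma c_div (f : R -> R) (c x : R) : continuous f x -> continuous (fun y => f y / c) x.
Proof. intros; unfold Rdiv; apply c_mult; auto; apply c_const. Qed.

Lemma exR_1 (f : R -> R) a b c : a <= b <= c -> ex_RInt f a c -> ex_RInt f a b.
Proof. intros; apply (ex_RInt_Chasles_1 (V:=R_CompleteNormedModule)) with c; auto. Qed.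
Lemma exR_2 (f : R -> R) a b c : a <= b <= c -> ex_RInt f a c -> ex_RInt f b c.
Proof. intros; apply (ex_RInt_Chasles_2 (V:=R_CompleteNormedModule)) with a; auto. Qed.
Lemma RInt_Ch (f : R -> R) a b c : ex_RInt f a b -> ex_RInt f b c -> RInt f a b + RInt f b c = RInt f a c.
Proof. intros; apply (RInt_Chasles (V:=R_CompleteNormedModule)); auto. Qed.
Lemma RInt_sw (f : R -> R) a b : ex_RInt f a b -> RInt f b a = - RInt f a b.
Proof. intros H; rewrite <- (opp_RInt_swap (V:=R_CompleteNormedModule) f a b H); reflexivity. Qed.

Lemma mono_lim (F : R -> R) (a B : R) :
  (forall x y, a <= x -> x <= y -> F x <= F y) -> (forall x, a <= x -> F x <= B) ->
  exists L, (forall x, a <= x -> F x <= L) /\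
    (forall eps, 0 < eps -> exists M, a <= M /\ forall x, M <= x -> L - eps < F x).
Proof.
  intros Hm HB.
  set (E := fun y => exists x, a <= x /\ y = F x).
  assert (Hb : bound E). { exists B. intros y [x [Hx ->]]. auto. }
  assert (He : exists y, E y). { exists (F a). exists a. split; lra. }
  destruct (completeness E Hb He) as [L [HL1 HL2]].
  exists L; split.
  - intros x Hx. apply HL1. exists x; auto.
  - intros eps Heps.
    destruct (Classical_Prop.classic (exists x, a <= x /\ L - eps < F x)) as [[x [Hx1 Hx2]]|Hn].
    + exists x. split; auto. intros y Hy. specialize (Hm x y Hx1 Hy). lra.
    + exfalso. assert (L <= L - eps); [|lra].
      apply HL2. intros y [x [Hx ->]].
      destruct (Rle_or_lt (F x) (L - eps)); auto. exfalso; apply Hn; exists x; auto.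
Qed.

Lemma RInt_mono_b (f : R -> R) a x y :
  a <= x -> x <= y -> ex_RInt f a y -> (forall z, x < z < y -> 0 <= f z) ->
  RInt f a x <= RInt f a y.
Proof.
  intros H1 H2 Hi Hp.
  assert (Hax : ex_RInt f a x) by (apply exR_1 with y; [lra|auto]).
  assert (Hxy : ex_RInt f x y) by (apply exR_2 with a; [lra|auto]).
  rewrite <- (RInt_Ch f a x y Hax Hxy).
  assert (0 <= RInt f x y) by (apply RInt_ge_0; auto).
  lra.
Qed.

Lemma int_pos_of (f : R -> R) (B : R) :
  (forall b, 0 <= b -> ex_RInt f 0 b) -> (forall x, 0 <= x -> 0 <= f x) ->
  (forall b, 0 <= b -> RInt f 0 b <= B) ->
  exists L, is_int_pos f L /\ (forall b, 0 <= b -> RInt f 0 b <= L).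
Proof.
  intros Hi Hp HB.
  destruct (mono_lim (fun b => RInt f 0 b) 0 B) as [L [HL1 HL2]].
  { intros x y Hx Hy. apply RInt_mono_b; [auto|auto|apply Hi; lra|intros z Hz; apply Hp; lra]. }
  { auto. }
  exists L; split; auto. split.
  - intros b Hb. constructor. apply ex_RInt_Reals_0. auto.
  - intros eps Heps. destruct (HL2 eps Heps) as [M [HM1 HM2]].
    exists (M + 1); split; [lra|].
    intros b pr Hb. rewrite <- RInt_Reals.
    specialize (HM2 b ltac:(lra)). specialize (HL1 b ltac:(lra)).
    apply Rabs_def1; lra.
Qed.

Lemma int_pos_ex (f : R -> R) L : is_int_pos f L -> forall b, 0 <= b -> ex_RInt f 0 b.
Proof. intros [H _] b Hb. destruct (H b Hb) as [pr]. apply ex_RInt_Reals_1; auto. Qed.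

Lemma int_pos_lim (f : R -> R) L : is_int_pos f L ->
  forall eps, 0 < eps -> exists M, 0 < M /\ forall b, M <= b -> Rabs (RInt f 0 b - L) < eps.
Proof.
  intros HL eps Heps. destruct HL as [H1 H2]. destruct (H2 eps Heps) as [M [HM1 HM2]].
  exists M; split; auto. intros b Hb.
  assert (Hi : ex_RInt f 0 b) by (apply int_pos_ex with L; [split; auto| lra]).
  pose proof (ex_RInt_Reals_0 f 0 b Hi) as pr.
  rewrite (RInt_Reals f 0 b pr). apply HM2; auto.
Qed.

Lemma int_pos_le (f : R -> R) L : is_int_pos f L -> (forall x, 0 <= x -> 0 <= f x) ->
  forall b, 0 <= b -> RInt f 0 b <= L.
Proof.
  intros HL Hp b Hb.
  destruct (Rle_or_lt (RInt f 0 b) L) as [|Hc]; auto. exfalso.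
  destruct (int_pos_lim f L HL (RInt f 0 b - L) ltac:(lra)) as [M [HM1 HM2]].
  set (b' := Rmax b M).
  specialize (HM2 b' (Rmax_r _ _)).
  assert (RInt f 0 b <= RInt f 0 b').
  { apply RInt_mono_b; auto. apply Rmax_l. apply (int_pos_ex f L HL). unfold b'. pose proof (Rmax_l b M); lra.
    intros z Hz; apply Hp; lra. }
  apply Rabs_def2 in HM2. lra.
Qed.

Lemma int_pos_ub (f : R -> R) L C : is_int_pos f L ->
  (forall b, 0 <= b -> RInt f 0 b <= C) -> L <= C.
Proof.
  intros HL HC. destruct (Rle_or_lt L C) as [|Hc]; auto. exfalso.
  destruct (int_pos_lim f L HL (L - C) ltac:(lra)) as [M [HM1 HM2]].
  specialize (HM2 M (Rle_refl _)). specialize (HC M ltac:(lra)).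
  apply Rabs_def2 in HM2. lra.
Qed.

Lemma int_pos_approx (f : R -> R) L : is_int_pos f L ->
  forall eps, 0 < eps -> exists b, 0 <= b /\ L - eps < RInt f 0 b.
Proof.
  intros HL eps Heps. destruct (int_pos_lim f L HL eps Heps) as [M [HM1 HM2]].
  exists M; split; [lra|]. specialize (HM2 M (Rle_refl _)). apply Rabs_def2 in HM2. lra.
Qed.

Definition limp (F : R -> R) (L : R) := forall eps, 0 < eps -> exists M, forall x, M <= x -> Rabs (F x - L) < eps.
Definition limm (F : R -> R) (L : R) := forall eps, 0 < eps -> exists M, forall x, x <= M -> Rabs (F x - L) < eps.

Lemma int_R_of (f P Q : R -> R) Lp Lq :
  (forall a b, a <= b -> ex_RInt f a b) ->
  (forall a b, a <= b -> RInt f a b = P b - Q a) ->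
  limp P Lp -> limm Q Lq -> is_int_R f (Lp - Lq).
Proof.
  intros Hi Hf HP HQ. split.
  - intros a b Hab. constructor. apply ex_RInt_Reals_0. auto.
  - intros eps Heps.
    destruct (HP (eps/2) ltac:(lra)) as [M1 HM1].
    destruct (HQ (eps/2) ltac:(lra)) as [M2 HM2].
    exists (Rabs M1 + Rabs M2 + 1). split. pose proof (Rabs_pos M1); pose proof (Rabs_pos M2); lra.
    intros a b pr Ha Hb. rewrite <- RInt_Reals.
    pose proof (Rle_abs M1); pose proof (Rle_abs M2); pose proof (Rabs_pos M1); pose proof (Rabs_pos M2);
    pose proof (Rabs_pos M1); pose proof (Rle_abs (-M2)).
    rewrite Rabs_Ropp in *.
    rewrite Hf by lra.
    specialize (HM1 b ltac:(lra)). specialize (HM2 a ltac:(lra)).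
    apply Rabs_def2 in HM1; apply Rabs_def2 in HM2. apply Rabs_def1; lra.
Qed.

Lemma exRc (f : R -> R) a b : (forall z, Rmin a b <= z <= Rmax a b -> continuous f z) -> ex_RInt f a b.
Proof. intros; apply (ex_RInt_continuous (V:=R_CompleteNormedModule)); auto. Qed.
Lemma isR_unique (f : R -> R) a b l : is_RInt f a b l -> RInt f a b = l.
Proof. intros; apply (is_RInt_unique (V:=R_CompleteNormedModule)); auto. Qed.
Lemma isR_correct (f : R -> R) a b : ex_RInt f a b -> is_RInt f a b (RInt f a b).
Proof. intros; apply (RInt_correct (V:=R_CompleteNormedModule)); auto. Qed.
Lemma RInt_scal_R (f : R -> R) a b c : ex_RInt f a b -> RInt (fun x => c * f x) a b = c * RInt f a b.
Proof. intros; apply (RInt_scal (V:=R_CompleteNormedModule)); auto. Qed.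
Lemma ex_scal_R (f : R -> R) a b c : ex_RInt f a b -> ex_RInt (fun x => c * f x) a b.
Proof. intros; apply (ex_RInt_scal (V:=R_NormedModule)); auto. Qed.
Ltac toR := match goal with |- @eq _ ?x ?y => change (@eq R x y) end.
Lemma isR_derive (f df : R -> R) a b :
  (forall x, Rmin a b <= x <= Rmax a b -> is_derive f x (df x)) ->
  (forall x, Rmin a b <= x <= Rmax a b -> continuous df x) ->
  RInt df a b = f b - f a.
Proof. intros H1 H2. apply isR_unique. apply (is_RInt_derive (V:=R_CompleteNormedModule) f df a b H1 H2). Qed.
Lemma exR_derive (f df : R -> R) a b :
  (forall x, Rmin a b <= x <= Rmax a b -> continuous df x) -> ex_RInt df a b.
Proof. intros; apply exRc; auto. Qed.
Lemma c_of_derive (f : R -> R) x l : is_derive f x l -> continuous f x.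
Proof. intros H. apply (ex_derive_continuous (K:=R_AbsRing) (V:=R_NormedModule)). exists l; auto. Qed.

Lemma exp_le (x y : R) : x <= y -> exp x <= exp y.
Proof. intros [H|H]. left; apply exp_increasing; auto. subst; lra. Qed.

Lemma sqrt2PI_pos : 0 < sqrt (2 * PI).
Proof. apply sqrt_lt_R0. pose proof PI_RGT_0; lra. Qed.

Lemma phi_pos z : 0 < phi z.
Proof. unfold phi. apply Rdiv_lt_0_compat. apply exp_pos. apply sqrt2PI_pos. Qed.

Lemma phi_even z : phi (- z) = phi z.
Proof. unfold phi. replace ((-z)^2) with (z^2) by ring. reflexivity. Qed.

Lemma phi_cont x : continuous phi x.
Proof.
  unfold phi. apply c_div. apply c_exp. apply c_div. apply c_opp. apply c_pow. apply c_id.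
Qed.

Lemma phi_ex a b : ex_RInt phi a b.
Proof. apply exRc. intros; apply phi_cont. Qed.

Lemma phi_derive x : is_derive phi x (- x * phi x).
Proof. unfold phi. auto_derive; auto.
  replace (- (x * (x * 1)) * / 2) with (- x ^ 2 / 2) by (unfold Rdiv; ring).
  field. apply Rgt_not_eq, sqrt2PI_pos. Qed.

Definition Phi0 (x : R) := RInt phi 0 x.

Lemma Phi0_diff a b : RInt phi a b = Phi0 b - Phi0 a.
Proof.
  unfold Phi0. rewrite <- (RInt_Ch phi 0 a b) by apply phi_ex.
  rewrite (RInt_sw phi a 0) by apply phi_ex. lra.
Qed.

Lemma Phi0_mono x y : x <= y -> Phi0 x <= Phi0 y.
Proof.
  intros H. assert (0 <= RInt phi x y). apply RInt_ge_0; auto. apply phi_ex.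
  intros; left; apply phi_pos. rewrite Phi0_diff in H0. lra.
Qed.

Lemma Phi0_0 : Phi0 0 = 0.
Proof. unfold Phi0. rewrite RInt_point. reflexivity. Qed.

Lemma Phi0_odd x : Phi0 (- x) = - Phi0 x.
Proof.
  unfold Phi0.
  pose proof (RInt_comp_lin (V:=R_CompleteNormedModule) phi (-1) 0 0 x) as E.
  replace (-1 * 0 + 0) with 0 in E by ring. replace (-1 * x + 0) with (-x) in E by ring.
  rewrite <- E by apply phi_ex.
  rewrite (RInt_ext _ (fun y => scal (-1) (phi y))).
  rewrite (RInt_scal (V:=R_CompleteNormedModule)) by apply phi_ex. unfold scal; simpl; unfold mult; simpl. ring.
  intros y _. replace (-1 * y + 0) with (- y) by ring. rewrite phi_even. reflexivity.
Qed.

Lemma Phi0_bound b : 0 <= b -> Phi0 b <= exp (1/2) / sqrt (2 * PI).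
Proof.
  intros Hb. unfold Phi0.
  assert (Hd : RInt (fun z => exp (1/2 - z) / sqrt (2 * PI)) 0 b =
                ((fun z => - exp (1/2 - z) / sqrt (2*PI)) b) - ((fun z => - exp (1/2 - z) / sqrt (2*PI)) 0)).
  { apply (isR_derive (fun z => - exp (1/2 - z) / sqrt (2*PI))).
    - intros x _. auto_derive; auto. replace (exp (1 / 2 + - x)) with (exp (1/2 - x)) by (f_equal; ring). field. apply Rgt_not_eq, sqrt2PI_pos.
    - intros x _. apply c_div. apply c_exp. apply c_plus. apply c_const. apply c_opp, c_id. }
  assert (RInt phi 0 b <= RInt (fun z => exp (1/2 - z) / sqrt (2 * PI)) 0 b).
  { apply RInt_le; auto. apply phi_ex. apply exRc. intros; apply c_div; apply c_exp; apply c_plus. apply c_const. apply c_opp, c_id.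
    intros x _. unfold phi. unfold Rdiv. apply Rmult_le_compat_r. left; apply Rinv_0_lt_compat, sqrt2PI_pos.
    apply exp_le. pose proof (pow2_ge_0 (x - 1)). lra. }
  rewrite Hd in H. simpl in H.
  assert (0 < exp (1/2 - b) / sqrt (2*PI)). apply Rdiv_lt_0_compat. apply exp_pos. apply sqrt2PI_pos.
  replace (1/2 - 0) with (1/2) in H by ring. unfold Rdiv in *. lra.
Qed.

Lemma H_exists : { H : R | (forall b, 0 <= b -> Phi0 b <= H) /\ limp Phi0 H }.
Proof.
  apply constructive_indefinite_description.
  destruct (mono_lim Phi0 0 (exp (1/2) / sqrt (2 * PI))) as [L [HL1 HL2]].
  { intros; apply Phi0_mono; auto. }
  { apply Phi0_bound. }
  exists L; split; auto.
  intros eps Heps. destruct (HL2 eps Heps) as [M [HM1 HM2]]. exists M. intros x Hx.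
  specialize (HM2 x Hx). specialize (HL1 x ltac:(lra)). apply Rabs_def1; lra.
Qed.

Definition Hg := proj1_sig H_exists.
Lemma Hg_ub b : 0 <= b -> Phi0 b <= Hg.
Proof. apply (proj1 (proj2_sig H_exists)). Qed.
Lemma Hg_lim : limp Phi0 Hg.
Proof. apply (proj2 (proj2_sig H_exists)). Qed.
Lemma Hg_nonneg : 0 <= Hg.
Proof. rewrite <- Phi0_0. apply Hg_ub. lra. Qed.
Lemma Phi0_le_Hg x : Phi0 x <= Hg.
Proof.
  destruct (Rle_or_lt 0 x). apply Hg_ub; auto.
  pose proof (Phi0_mono x 0 ltac:(lra)). rewrite Phi0_0 in H0. pose proof Hg_nonneg. lra.
Qed.
Lemma Hg_limm : limm Phi0 (- Hg).
Proof.
  intros eps Heps. destruct (Hg_lim eps Heps) as [M HM]. exists (- M). intros x Hx.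
  replace x with (- - x) by ring. rewrite Phi0_odd. specialize (HM (-x) ltac:(lra)).
  replace (- Phi0 (- x) - - Hg) with (- (Phi0 (-x) - Hg)) by ring. rewrite Rabs_Ropp. auto.
Qed.

Definition T (x : R) := Hg - Phi0 x.

Lemma T_nonneg x : 0 <= T x.
Proof. unfold T. pose proof (Phi0_le_Hg x). lra. Qed.
Lemma T_antimono x y : x <= y -> T y <= T x.
Proof. unfold T. intros H. pose proof (Phi0_mono x y H). lra. Qed.
Lemma T_le_Hg x : 0 <= x -> T x <= Hg.
Proof. unfold T. intros H. pose proof (Phi0_mono 0 x H). rewrite Phi0_0 in H0. lra. Qed.

Lemma Phi0_cont x : continuous Phi0 x.
Proof.
  apply (c_of_derive _ _ (phi x)). unfold Phi0.
  apply (is_derive_RInt (V:=R_NormedModule) phi (fun b => RInt phi 0 b) 0 x).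
  - apply filter_forall. intros y. apply (RInt_correct (V:=R_CompleteNormedModule)). apply phi_ex.
  - apply phi_cont.
Qed.

Lemma T_cont x : continuous T x.
Proof. unfold T. apply c_plus. apply c_const. apply c_opp. apply Phi0_cont. Qed.

Lemma T_tail x : 0 < x -> T x <= phi x / x.
Proof.
  intros Hx.
  assert (Hb : forall b, x <= b -> RInt phi x b <= phi x / x).
  { intros b Hxb.
    assert (Hd : RInt (fun z => phi z * z / x) x b =
                ((fun z => - phi z / x) b) - ((fun z => - phi z / x) x)).
    { apply (isR_derive (fun z => - phi z / x)).
      - intros y _. pose proof (phi_derive y) as D.
        apply (is_derive_ext (fun z => (-1/x) * phi z)). { intros t. toR. field. lra. }
        replace (phi y * y / x) with ((-1/x) * (- y * phi y)) by (field; lra).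
        apply (is_derive_scal phi). auto.
      - intros y _. apply c_div. apply c_mult. apply phi_cont. apply c_id. }
    simpl in Hd.
    assert (RInt phi x b <= RInt (fun z => phi z * z / x) x b).
    { apply RInt_le; auto. apply phi_ex. apply exRc. intros; apply c_div, c_mult. apply phi_cont. apply c_id.
      intros z Hz. pose proof (phi_pos z). unfold Rdiv. 
      apply Rle_trans with (phi z * (z * / x)).
      rewrite <- (Rmult_1_r (phi z)) at 1. apply Rmult_le_compat_l. lra.
      apply Rmult_le_reg_r with x; auto. rewrite Rmult_assoc, Rinv_l; lra. lra. }
    rewrite Hd in H. pose proof (phi_pos b). assert (0 < phi b / x) by (apply Rdiv_lt_0_compat; auto).
    unfold Rdiv in *. lra. }
  destruct (Rle_or_lt (T x) (phi x / x)) as [|Hc]; auto. exfalso.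
  destruct (Hg_lim (T x - phi x / x) ltac:(lra)) as [M HM].
  specialize (HM (Rmax M x) (Rmax_l _ _)). specialize (Hb (Rmax M x) (Rmax_r _ _)).
  rewrite Phi0_diff in Hb. apply Rabs_def2 in HM. unfold T in *. lra.
Qed.

Lemma ind_T (P : Prop) : P -> Defs.ind P = 1.
Proof. intros H. unfold Defs.ind. destruct (excluded_middle_informative P); tauto. Qed.
Lemma ind_F (P : Prop) : ~ P -> Defs.ind P = 0.
Proof. intros H. unfold Defs.ind. destruct (excluded_middle_informative P); tauto. Qed.
Lemma ind_01 (P : Prop) : 0 <= Defs.ind P <= 1.
Proof. unfold Defs.ind. destruct (excluded_middle_informative P); lra. Qed.

Lemma piece (f g : R -> R) a b : a <= b -> (forall x, a < x < b -> f x = g x) -> ex_RInt g a b ->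
  ex_RInt f a b /\ RInt f a b = RInt g a b.
Proof.
  intros Hab He Hg. split.
  - apply (ex_RInt_ext g). intros x Hx. rewrite Rmin_left, Rmax_right in Hx by lra. symmetry; auto. auto.
  - apply RInt_ext. intros x Hx. rewrite Rmin_left, Rmax_right in Hx by lra. auto.
Qed.

Lemma RInt_zero a b : RInt (fun _ => 0) a b = 0.
Proof. rewrite RInt_const. unfold scal; simpl; unfold mult; simpl. lra. Qed.
Lemma ex_zero a b : ex_RInt (fun _ => 0) a b.
Proof. apply exRc; intros; apply c_const. Qed.

Lemma step_up_f (g : R -> R) y : (forall z, y < z -> g z = 1) -> (forall z, z < y -> g z = 0) ->
  forall a b, a <= b -> ex_RInt (fun z => phi z * g z) a b /\
     RInt (fun z => phi z * g z) a b = Phi0 (Rmax b y) - Phi0 (Rmax a y).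
Proof.
  intros H1 H0 a b Hab.
  destruct (Rle_or_lt y a) as [Hya|Hay].
  - destruct (piece (fun z => phi z * g z) phi a b Hab) as [E1 E2].
    { intros x Hx. rewrite H1 by lra. ring. } apply phi_ex.
    split; auto. rewrite E2, Phi0_diff. rewrite !Rmax_left by lra. auto.
  - destruct (Rle_or_lt b y) as [Hby|Hyb].
    + destruct (piece (fun z => phi z * g z) (fun _ => 0) a b Hab) as [E1 E2].
      { intros x Hx. rewrite H0 by lra. ring. } apply ex_zero.
      split; auto. rewrite E2, RInt_zero. rewrite !Rmax_right by lra. lra.
    + destruct (piece (fun z => phi z * g z) (fun _ => 0) a y) as [E1 E2]. lra.
      { intros x Hx. rewrite H0 by lra. ring. } apply ex_zero.
      destruct (piece (fun z => phi z * g z) phi y b) as [F1 F2]. lra.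
      { intros x Hx. rewrite H1 by lra. ring. } apply phi_ex.
      split. apply (ex_RInt_Chasles _ a y b); auto.
      rewrite <- (RInt_Ch _ a y b E1 F1). rewrite E2, F2, RInt_zero, Phi0_diff.
      rewrite Rmax_left, Rmax_right by lra. lra.
Qed.

Lemma step_dn_f (g : R -> R) y : (forall z, z < y -> g z = 1) -> (forall z, y < z -> g z = 0) ->
  forall a b, a <= b -> ex_RInt (fun z => phi z * g z) a b /\
     RInt (fun z => phi z * g z) a b = Phi0 (Rmin b y) - Phi0 (Rmin a y).
Proof.
  intros H1 H0 a b Hab.
  destruct (Rle_or_lt b y) as [Hby|Hyb].
  - destruct (piece (fun z => phi z * g z) phi a b Hab) as [E1 E2].
    { intros x Hx. rewrite H1 by lra. ring. } apply phi_ex.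
    split; auto. rewrite E2, Phi0_diff. rewrite !Rmin_left by lra. auto.
  - destruct (Rle_or_lt y a) as [Hya|Hay].
    + destruct (piece (fun z => phi z * g z) (fun _ => 0) a b Hab) as [E1 E2].
      { intros x Hx. rewrite H0 by lra. ring. } apply ex_zero.
      split; auto. rewrite E2, RInt_zero. rewrite !Rmin_right by lra. lra.
    + destruct (piece (fun z => phi z * g z) phi a y) as [E1 E2]. lra.
      { intros x Hx. rewrite H1 by lra. ring. } apply phi_ex.
      destruct (piece (fun z => phi z * g z) (fun _ => 0) y b) as [F1 F2]. lra.
      { intros x Hx. rewrite H0 by lra. ring. } apply ex_zero.
      split. apply (ex_RInt_Chasles _ a y b); auto.
      rewrite <- (RInt_Ch _ a y b E1 F1). rewrite E2, F2, RInt_zero, Phi0_diff.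
      rewrite (Rmin_right b y), (Rmin_left a y) by lra. lra.
Qed.

Lemma limp_max y : limp (fun b => Phi0 (Rmax b y)) Hg.
Proof.
  intros eps Heps. destruct (Hg_lim eps Heps) as [M HM]. exists (Rmax M y). intros x Hx.
  pose proof (Rmax_l M y); pose proof (Rmax_r M y). rewrite Rmax_left by lra. apply HM; lra.
Qed.
Lemma limm_max y : limm (fun a => Phi0 (Rmax a y)) (Phi0 y).
Proof.
  intros eps Heps. exists y. intros x Hx. rewrite Rmax_right by lra.
  replace (Phi0 y - Phi0 y) with 0 by ring. rewrite Rabs_R0; auto.
Qed.
Lemma limp_min y : limp (fun b => Phi0 (Rmin b y)) (Phi0 y).
Proof.
  intros eps Heps. exists y. intros x Hx. rewrite Rmin_right by lra.
  replace (Phi0 y - Phi0 y) with 0 by ring. rewrite Rabs_R0; auto.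
Qed.
Lemma limm_min y : limm (fun a => Phi0 (Rmin a y)) (- Hg).
Proof.
  intros eps Heps. destruct (Hg_limm eps Heps) as [M HM]. exists (Rmin M y). intros x Hx.
  pose proof (Rmin_l M y); pose proof (Rmin_r M y). rewrite Rmin_left by lra. apply HM; lra.
Qed.

Lemma limp_plus F G a b : limp F a -> limp G b -> limp (fun x => F x + G x) (a + b).
Proof.
  intros HF HG eps Heps. destruct (HF (eps/2) ltac:(lra)) as [M1 H1]. destruct (HG (eps/2) ltac:(lra)) as [M2 H2].
  exists (Rmax M1 M2). intros x Hx. pose proof (Rmax_l M1 M2); pose proof (Rmax_r M1 M2).
  specialize (H1 x ltac:(lra)); specialize (H2 x ltac:(lra)). apply Rabs_def2 in H1; apply Rabs_def2 in H2.
  apply Rabs_def1; lra.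
Qed.
Lemma limm_plus F G a b : limm F a -> limm G b -> limm (fun x => F x + G x) (a + b).
Proof.
  intros HF HG eps Heps. destruct (HF (eps/2) ltac:(lra)) as [M1 H1]. destruct (HG (eps/2) ltac:(lra)) as [M2 H2].
  exists (Rmin M1 M2). intros x Hx. pose proof (Rmin_l M1 M2); pose proof (Rmin_r M1 M2).
  specialize (H1 x ltac:(lra)); specialize (H2 x ltac:(lra)). apply Rabs_def2 in H1; apply Rabs_def2 in H2.
  apply Rabs_def1; lra.
Qed.

Lemma inner2 (y : R) : is_int_R (fun z => phi z * Defs.ind (y < z)) (T y).
Proof.
  replace (T y) with (Hg - Phi0 y) by (unfold T; ring).
  apply int_R_of with (P := fun b => Phi0 (Rmax b y)) (Q := fun a => Phi0 (Rmax a y)).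
  - intros a b Hab. apply (step_up_f (fun z => Defs.ind (y < z)) y); auto.
    intros; apply ind_T; auto. intros; apply ind_F; lra.
  - intros a b Hab. apply (step_up_f (fun z => Defs.ind (y < z)) y); auto.
    intros; apply ind_T; auto. intros; apply ind_F; lra.
  - apply limp_max.
  - apply limm_max.
Qed.

Lemma inner0 : is_int_R (fun _ => 0) 0.
Proof.
  assert (H : is_int_R (fun _ => 0) (0 - 0)).
  apply int_R_of with (P := fun _ => 0) (Q := fun _ => 0).
  - intros; apply ex_zero.
  - intros; rewrite RInt_zero; lra.
  - intros eps Heps; exists 0; intros; rewrite Rminus_0_r, Rabs_R0; auto.
  - intros eps Heps; exists 0; intros; rewrite Rminus_0_r, Rabs_R0; auto.
  - rewrite Rminus_0_r in H. exact H.
Qed.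

Lemma int_R_ext (f g : R -> R) l : (forall z, f z = g z) -> is_int_R f l -> is_int_R g l.
Proof.
  intros E H. replace g with f; auto. apply functional_extensionality; auto.
Qed.

Lemma inner1 (y : R) (P : R -> Prop) : 0 < y ->
  (forall z, P z <-> (y <= z \/ z <= - y)) ->
  is_int_R (fun z => phi z * Defs.ind (P z)) (2 * T y).
Proof.
  intros Hy HP.
  set (g1 := fun z => Defs.ind (y <= z)). set (g2 := fun z => Defs.ind (z <= - y)).
  assert (E : forall z, phi z * Defs.ind (P z) = phi z * g1 z + phi z * g2 z).
  { intros z. unfold g1, g2. destruct (Rle_or_lt y z).
    - rewrite (ind_T (P z)) by (apply HP; auto). rewrite (ind_T (y <= z)) by auto. rewrite (ind_F (z <= -y)) by lra. ring.
    - destruct (Rle_or_lt z (-y)).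
      + rewrite (ind_T (P z)) by (apply HP; auto). rewrite (ind_F (y <= z)) by lra. rewrite (ind_T (z <= -y)) by auto. ring.
      + rewrite (ind_F (P z)). rewrite (ind_F (y <= z)) by lra. rewrite (ind_F (z <= -y)) by lra. ring.
        rewrite HP. lra. }
  apply int_R_ext with (fun z => phi z * g1 z + phi z * g2 z); [intros; symmetry; auto|].
  assert (U : forall a b, a <= b -> ex_RInt (fun z => phi z * g1 z) a b /\
     RInt (fun z => phi z * g1 z) a b = Phi0 (Rmax b y) - Phi0 (Rmax a y)).
  { apply step_up_f. intros; apply ind_T; lra. intros; apply ind_F; lra. }
  assert (D : forall a b, a <= b -> ex_RInt (fun z => phi z * g2 z) a b /\
     RInt (fun z => phi z * g2 z) a b = Phi0 (Rmin b (-y)) - Phi0 (Rmin a (-y))).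
  { apply step_dn_f. intros; apply ind_T; lra. intros; apply ind_F; lra. }
  replace (2 * T y) with ((Hg + Phi0 (-y)) - (Phi0 y + - Hg)) by (unfold T; rewrite Phi0_odd; ring).
  apply int_R_of with (P := fun b => Phi0 (Rmax b y) + Phi0 (Rmin b (-y)))
                      (Q := fun a => Phi0 (Rmax a y) + Phi0 (Rmin a (-y))).
  - intros a b Hab. apply (ex_RInt_plus (V:=R_NormedModule)); [apply U|apply D]; auto.
  - intros a b Hab. rewrite (RInt_plus (V:=R_CompleteNormedModule)); [|apply U|apply D]; auto.
    destruct (U a b Hab) as [_ ->]. destruct (D a b Hab) as [_ ->]. simpl. unfold plus; simpl. lra.
  - apply limp_plus. apply limp_max. apply limp_min.
  - apply limm_plus. apply limm_max. apply limm_min.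
Qed.

Lemma exp_pow (n : nat) (y : R) : exp (INR n * y) = exp y ^ n.
Proof.
  induction n. simpl. rewrite Rmult_0_l, exp_0; auto.
  rewrite S_INR. replace ((INR n + 1) * y) with (INR n * y + y) by ring. rewrite exp_plus, IHn. simpl. ring.
Qed.

Lemma pow_le_exp (n : nat) (u : R) : 0 <= u -> u ^ n <= (4 * INR n) ^ n * exp (u / 4).
Proof.
  intros Hu. destruct n as [|m].
  - simpl. pose proof (exp_ineq1_le (u/4)). lra.
  - set (n := S m). assert (Hn : 0 < INR n) by (apply lt_0_INR; unfold n; lia).
    replace (exp (u/4)) with (exp (u / (4 * INR n)) ^ n).
    2:{ rewrite <- exp_pow. f_equal. field. lra. }
    replace (u ^ n) with ((4 * INR n) ^ n * (u / (4 * INR n)) ^ n).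
    2:{ rewrite <- Rpow_mult_distr. f_equal. field. lra. }
    apply Rmult_le_compat_l. apply pow_le; lra.
    apply pow_incr. split. apply Rdiv_le_0_compat; lra.
    pose proof (exp_ineq1_le (u / (4 * INR n))). lra.
Qed.

Definition chi (n : nat) (u : R) := sqrt u ^ n * exp (- u / 2).

Lemma chisq_chi n : chisq_unnorm (n + 2) = chi n.
Proof. apply functional_extensionality. intros u. unfold chisq_unnorm, chi. f_equal. f_equal. lia. Qed.

Lemma chi_cont n u : continuous (chi n) u.
Proof. unfold chi. apply c_mult. apply c_pow. apply c_sqrt, c_id. apply c_exp, c_div, c_opp, c_id. Qed.
Lemma chi_nonneg n u : 0 <= chi n u.
Proof. unfold chi. apply Rmult_le_pos. apply pow_le, sqrt_pos. left; apply exp_pos. Qed.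
Lemma chi_ex n a b : ex_RInt (chi n) a b.
Proof. apply exRc; intros; apply chi_cont. Qed.

Definition Cn (n : nat) := 1 + (4 * INR n) ^ n.

Lemma chi_bound n u : 0 <= u -> chi n u <= Cn n * exp (- u / 4).
Proof.
  intros Hu. unfold chi, Cn.
  assert (Hs : sqrt u ^ n <= 1 + (4 * INR n) ^ n * exp (u / 4)).
  { destruct (Rle_or_lt (sqrt u) 1).
    - assert (sqrt u ^ n <= 1). { rewrite <- (pow1 n). apply pow_incr. split; auto. apply sqrt_pos. }
      assert (0 <= (4 * INR n) ^ n * exp (u/4)). apply Rmult_le_pos. apply pow_le. pose proof (pos_INR n); lra. left; apply exp_pos. lra.
    - assert (sqrt u ^ n <= u ^ n).
      { replace (u ^ n) with (sqrt u ^ (2 * n)). apply Rle_pow; lia || lra.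
        rewrite pow_mult. simpl. rewrite Rmult_1_r, sqrt_sqrt; auto. }
      pose proof (pow_le_exp n u Hu). lra. }
  assert (Hp : 0 <= (4 * INR n) ^ n) by (apply pow_le; pose proof (pos_INR n); lra).
  assert (E1 : 1 <= exp (u/4)) by (pose proof (exp_ineq1_le (u/4)); lra).
  replace (exp (- u / 4)) with (exp (u / 4) * exp (- u / 2)) by (rewrite <- exp_plus; f_equal; field).
  assert (0 < exp (- u / 2)) by apply exp_pos.
  assert (sqrt u ^ n <= (1 + (4 * INR n) ^ n) * exp (u / 4)) by nra.
  nra.
Qed.

Lemma RInt_exp4 b : RInt (fun u => exp (- u / 4)) 0 b = 4 - 4 * exp (- b / 4).
Proof.
  rewrite (isR_derive (fun u => - 4 * exp (- u / 4))).
  - replace (- 0 / 4) with 0 by field. rewrite exp_0. toR. ring.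
  - intros x _. auto_derive; auto. replace (- x * / 4) with (- x / 4) by field. field.
  - intros x _. apply c_exp, c_div, c_opp, c_id.
Qed.

Lemma N_ex n : exists N, is_int_pos (chi n) N /\ 0 < N /\ forall b, 0 <= b -> RInt (chi n) 0 b <= N.
Proof.
  destruct (int_pos_of (chi n) (4 * Cn n)) as [N [HN1 HN2]].
  - intros; apply chi_ex.
  - intros; apply chi_nonneg.
  - intros b Hb. apply Rle_trans with (RInt (fun u => Cn n * exp (- u / 4)) 0 b).
    apply RInt_le; auto. apply chi_ex. apply exRc; intros; apply c_mult. apply c_const. apply c_exp, c_div, c_opp, c_id.
    intros x Hx. apply chi_bound; lra.
    rewrite RInt_scal_R. rewrite RInt_exp4. assert (0 < exp (- b/4)) by apply exp_pos.
    assert (0 < Cn n). { unfold Cn. pose proof (pow_le (4 * INR n) n ltac:(pose proof (pos_INR n); lra)). lra. }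
    nra. apply exRc; intros; apply c_exp, c_div, c_opp, c_id.
  - exists N. split; auto. split; auto.
    apply Rlt_le_trans with (RInt (chi n) 0 2); [|apply HN2; lra].
    apply RInt_gt_0. lra. intros x Hx. unfold chi. apply Rmult_lt_0_compat. apply pow_lt. apply sqrt_lt_R0; lra. apply exp_pos.
    intros; apply chi_cont.
Qed.

Lemma outer_ex n N (h : R -> R) K :
  is_int_pos (chi n) N -> (forall b, 0 <= b -> RInt (chi n) 0 b <= N) ->
  (forall u, 0 <= u -> 0 <= h u <= K) ->
  (forall b, 0 <= b -> ex_RInt (fun u => chi n u * h u) 0 b) ->
  exists I, is_int_pos (fun u => chi n u * h u) I /\ forall b, 0 <= b -> RInt (fun u => chi n u * h u) 0 b <= I.
Proof.
  intros HN HN2 Hh Hex. apply int_pos_of with (K * N).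
  - auto.
  - intros x Hx. apply Rmult_le_pos. apply chi_nonneg. apply Hh; auto.
  - intros b Hb. apply Rle_trans with (RInt (fun u => K * chi n u) 0 b).
    apply RInt_le; auto. apply ex_scal_R, chi_ex. intros x Hx. destruct (Hh x ltac:(lra)). pose proof (chi_nonneg n x). nra.
    rewrite RInt_scal_R by apply chi_ex. specialize (HN2 b Hb). assert (0 <= K). destruct (Hh 0 ltac:(lra)); lra. nra.
Qed.

Definition h2 (delta c u : R) := T (delta + sqrt u * c).
Definition h1 (delta u : R) := Defs.ind (u >= delta ^ 2) * (2 * T (2 * sqrt u)).

Lemma h2_cont delta c u : continuous (h2 delta c) u.
Proof. unfold h2. apply (c_comp (fun u => delta + sqrt u * c) T). apply c_plus. apply c_const. apply c_mult. apply c_sqrt, c_id. apply c_const. apply T_cont. Qed.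

Lemma I2_ex n N delta c : is_int_pos (chi n) N -> (forall b, 0 <= b -> RInt (chi n) 0 b <= N) ->
  0 <= delta -> 0 <= c ->
  exists I, is_int_pos (fun u => chi n u * h2 delta c u) I /\
    forall b, 0 <= b -> RInt (fun u => chi n u * h2 delta c u) 0 b <= I.
Proof.
  intros HN HN2 Hd Hc. apply outer_ex with N Hg; auto.
  - intros u Hu. split. apply T_nonneg. apply T_le_Hg. pose proof (sqrt_pos u). nra.
  - intros b Hb. apply exRc. intros. apply c_mult. apply chi_cont. apply h2_cont.
Qed.

Lemma I1_ex n N delta : is_int_pos (chi n) N -> (forall b, 0 <= b -> RInt (chi n) 0 b <= N) ->
  0 < delta ->
  exists I, is_int_pos (fun u => chi n u * h1 delta u) I /\
    forall b, 0 <= b -> RInt (fun u => chi n u * h1 delta u) 0 b <= I.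
Proof.
  intros HN HN2 Hd. apply outer_ex with N (2 * Hg); auto.
  - intros u Hu. unfold h1. pose proof (ind_01 (u >= delta^2)). pose proof (T_nonneg (2 * sqrt u)).
    pose proof (T_le_Hg (2 * sqrt u) ltac:(pose proof (sqrt_pos u); lra)). split; nra.
  - intros b Hb. assert (Hd2 : 0 < delta ^ 2) by (apply pow_lt; auto).
    destruct (Rle_or_lt b (delta ^ 2)).
    + apply (piece _ (fun _ => 0) 0 b Hb). intros x Hx. unfold h1. rewrite ind_F by lra. ring. apply ex_zero.
    + apply (ex_RInt_Chasles _ 0 (delta^2) b).
      apply (piece _ (fun _ => 0) 0 (delta^2)). lra. intros x Hx. unfold h1. rewrite ind_F by lra. ring. apply ex_zero.
      apply (piece _ (fun u => chi n u * (2 * T (2 * sqrt u))) (delta^2) b). lra.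
      intros x Hx. unfold h1. rewrite ind_T by lra. ring.
      apply exRc. intros. apply c_mult. apply chi_cont. apply c_mult. apply c_const.
      apply (c_comp (fun u => 2 * sqrt u) T). apply c_mult. apply c_const. apply c_sqrt, c_id. apply T_cont.
Qed.

Lemma inner_h2 delta c u : is_int_R (fun z => phi z * Defs.ind (delta + sqrt u * c < z)) (h2 delta c u).
Proof. apply inner2. Qed.

Lemma inner_h1 delta u : 0 < delta -> 0 <= u ->
  is_int_R (fun z => phi z * Defs.ind (/ 4 * z ^ 2 >= u /\ u >= delta ^ 2)) (h1 delta u).
Proof.
  intros Hd Hu. unfold h1. assert (Hd2 : 0 < delta ^ 2) by (apply pow_lt; auto).
  destruct (Rle_or_lt (delta ^ 2) u).
  - rewrite ind_T by lra. rewrite Rmult_1_l.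
    assert (Hs : 0 < sqrt u) by (apply sqrt_lt_R0; lra).
    apply inner1 with (P := fun z => / 4 * z ^ 2 >= u /\ u >= delta ^ 2). lra.
    intros z. pose proof (sqrt_sqrt u Hu). split.
    + intros [H1 H2]. destruct (Rle_or_lt (2 * sqrt u) z). left; auto.
      destruct (Rle_or_lt z (- (2 * sqrt u))). right; auto. exfalso. nra.
    + intros [H1|H1]; split; try lra; nra.
  - rewrite ind_F by lra. rewrite Rmult_0_l.
    apply int_R_ext with (fun _ => 0). intros z. rewrite ind_F. ring. lra. apply inner0.
Qed.

Lemma pointwise_lower n delta q v : 0 < delta -> 1 <= q -> 0 <= v ->
  / 2 * (/ q) ^ (n + 2) * (chi n v * h1 delta v) <=
  (/ q) ^ 2 * (chi n ((/ q) ^ 2 * v) * h2 delta (sqrt (q ^ 2 - 1)) ((/ q) ^ 2 * v)).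
Proof.
  intros Hd Hq Hv.
  set (r := / q). assert (Hr : 0 < r <= 1). { unfold r. split. apply Rinv_0_lt_compat; lra.
    rewrite <- Rinv_1. apply Rinv_le_contravar; lra. }
  assert (Es : sqrt (r ^ 2 * v) = r * sqrt v). { rewrite sqrt_mult. rewrite sqrt_pow2; lra. apply pow_le; lra. auto. }
  unfold chi, h1, h2. rewrite Es.
  rewrite Rpow_mult_distr.
  assert (Ee : exp (- v / 2) <= exp (- (r ^ 2 * v) / 2)).
  { apply exp_le. assert (r ^ 2 <= 1) by (rewrite <- (pow1 2); apply pow_incr; lra). nra. }
  assert (Hw : 0 <= sqrt v ^ n) by (apply pow_le, sqrt_pos).
  assert (Hrn : 0 <= r ^ n) by (apply pow_le; lra).
  assert (Hr2 : 0 <= r ^ 2) by (apply pow_le; lra).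
  assert (HT : 0 <= T (delta + r * sqrt v * sqrt (q ^ 2 - 1))) by apply T_nonneg.
  assert (Ep : 0 < exp (- v / 2)) by apply exp_pos.
  destruct (Rle_or_lt (delta ^ 2) v) as [Hdv|Hdv].
  - rewrite ind_T by lra.
    assert (HT2 : T (2 * sqrt v) <= T (delta + r * sqrt v * sqrt (q ^ 2 - 1))).
    { apply T_antimono.
      assert (delta <= sqrt v). { rewrite <- (sqrt_pow2 delta) by lra. apply sqrt_le_1_alt; auto. }
      assert (r * sqrt (q ^ 2 - 1) <= 1).
      { unfold r. assert (sqrt (q ^ 2 - 1) <= q). { rewrite <- (sqrt_pow2 q) at 2 by lra. apply sqrt_le_1_alt; lra. }
        apply Rmult_le_reg_l with q. lra. rewrite <- Rmult_assoc, Rinv_r by lra. lra. }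
      pose proof (sqrt_pos v). nra. }
    assert (HT0 : 0 <= T (2 * sqrt v)) by apply T_nonneg.
    replace (r ^ (n + 2)) with (r ^ 2 * r ^ n) by (rewrite pow_add; ring).
    apply Rle_trans with (r ^ 2 * (r ^ n * sqrt v ^ n * exp (- v / 2) * T (delta + r * sqrt v * sqrt (q ^ 2 - 1)))).
    + assert (0 <= r ^ n * sqrt v ^ n * exp (- v / 2)) by (apply Rmult_le_pos; [nra| lra]).
      assert (r ^ n * sqrt v ^ n * exp (- v / 2) * T (2 * sqrt v) <= r ^ n * sqrt v ^ n * exp (- v / 2) * T (delta + r * sqrt v * sqrt (q ^ 2 - 1))) by (apply Rmult_le_compat_l; auto).
      nra.
    + set (T2 := T (delta + r * sqrt v * sqrt (q ^ 2 - 1))) in *.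
      set (B1 := exp (- v / 2)) in *. set (B2 := exp (- (r ^ 2 * v) / 2)) in *.
      set (A := r ^ n * sqrt v ^ n).
      assert (A * B1 <= A * B2) by (apply Rmult_le_compat_l; unfold A; nra).
      assert (A * B1 * T2 <= A * B2 * T2) by (apply Rmult_le_compat_r; auto).
      unfold A in *. nra.
  - rewrite ind_F by lra. ring_simplify.
    apply Rmult_le_pos. apply Rmult_le_pos. apply Rmult_le_pos. apply Rmult_le_pos. auto. auto. auto. left; apply exp_pos. auto.
Qed.

Lemma lower n I1 I2 delta q : 0 < delta -> 1 <= q ->
  is_int_pos (fun u => chi n u * h1 delta u) I1 ->
  is_int_pos (fun u => chi n u * h2 delta (sqrt (q ^ 2 - 1)) u) I2 ->
  / 2 * (/ q) ^ (n + 2) * I1 <= I2.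
Proof.
  intros Hd Hq H1 H2.
  set (r := / q). assert (Hr : 0 < r <= 1). { unfold r. split. apply Rinv_0_lt_compat; lra.
    rewrite <- Rinv_1. apply Rinv_le_contravar; lra. }
  set (f := fun u => chi n u * h2 delta (sqrt (q ^ 2 - 1)) u).
  assert (Hf : forall a b, ex_RInt f a b).
  { intros; apply exRc. intros. unfold f. apply c_mult. apply chi_cont. apply h2_cont. }
  set (c0 := / 2 * r ^ (n + 2)).
  assert (Hc0 : 0 <= c0). { unfold c0. apply Rmult_le_pos. lra. apply pow_le; lra. }
  assert (Key : forall b, 0 <= b -> c0 * RInt (fun u => chi n u * h1 delta u) 0 b <= I2).
  { intros b Hb.
    apply Rle_trans with (RInt f 0 (r ^ 2 * b)).
    2:{ apply int_pos_le with (f := f); auto. intros x Hx. unfold f. apply Rmult_le_pos. apply chi_nonneg.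
        apply T_nonneg. apply Rmult_le_pos; auto. apply pow_le; lra. }
    pose proof (RInt_comp_lin (V:=R_CompleteNormedModule) f (r ^ 2) 0 0 b (Hf _ _)) as E.
    replace (r ^ 2 * 0 + 0) with 0 in E by ring. replace (r ^ 2 * b + 0) with (r ^ 2 * b) in E by ring.
    rewrite <- E.
    rewrite <- RInt_scal_R.
    2:{ apply (int_pos_ex _ _ H1); auto. }
    apply RInt_le; auto.
    - apply ex_scal_R. apply (int_pos_ex _ _ H1); auto.
    - apply exRc. intros. apply (continuous_scal_r (K:=R_AbsRing) (V:=R_NormedModule) (r^2) (fun y => f (r ^ 2 * y + 0))).
      apply (c_comp (fun y => r ^ 2 * y + 0) f). apply c_plus. apply c_mult. apply c_const. apply c_id. apply c_const.
      unfold f. apply c_mult. apply chi_cont. apply h2_cont.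
    - intros x Hx. change (scal (r ^ 2) (f (r ^ 2 * x + 0))) with (r ^ 2 * f (r ^ 2 * x + 0)).
      replace (r ^ 2 * x + 0) with (r ^ 2 * x) by ring.
      unfold c0, f, r. apply pointwise_lower; auto. lra. }
  destruct (Rle_or_lt (c0 * I1) I2) as [|Hc]. unfold c0, r in H. auto. exfalso.
  assert (Hc0' : 0 < c0). { unfold c0. apply Rmult_lt_0_compat. lra. apply pow_lt; lra. }
  destruct (int_pos_approx _ _ H1 ((c0 * I1 - I2) / c0)) as [b [Hb Hbb]].
  { apply Rdiv_lt_0_compat; lra. }
  specialize (Key b Hb).
  assert (c0 * (I1 - (c0 * I1 - I2) / c0) < c0 * RInt (fun u => chi n u * h1 delta u) 0 b) by (apply Rmult_lt_compat_l; auto).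
  replace (c0 * (I1 - (c0 * I1 - I2) / c0)) with I2 in H by (field; lra). lra.
Qed.

Definition mom (j : nat) (w : R) := w ^ j * exp (- w ^ 2 / 2).
Definition F (j : nat) (b : R) : R := RInt (mom j) 0 b.

Lemma mom_cont j w : continuous (mom j) w.
Proof. unfold mom. apply c_mult. apply c_pow, c_id. apply c_exp, c_div, c_opp, c_pow, c_id. Qed.
Lemma mom_ex j a b : ex_RInt (mom j) a b.
Proof. apply exRc; intros; apply mom_cont. Qed.
Lemma mom_nonneg j w : 0 <= w -> 0 <= mom j w.
Proof. intros. unfold mom. apply Rmult_le_pos. apply pow_le; auto. left; apply exp_pos. Qed.

Lemma F_mono j b b' : 0 <= b -> b <= b' -> F j b <= F j b'.
Proof. intros. unfold F. apply RInt_mono_b; auto. apply mom_ex. intros; apply mom_nonneg; lra. Qed.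

Lemma subst_sq (g : R -> R) b : (forall u, continuous g u) ->
  RInt g 0 (b ^ 2) = RInt (fun w => 2 * w * g (w ^ 2)) 0 b.
Proof.
  intros Hg.
  pose proof (RInt_comp (V:=R_CompleteNormedModule) g (fun w => w ^ 2) (fun w => 2 * w) 0 b) as E.
  simpl in E. replace (0 * (0 * 1)) with 0 in E by ring. replace (b * (b * 1)) with (b ^ 2) in E by ring.
  rewrite <- E.
  - apply RInt_ext. intros x _. change (scal (2 * x) (g (x * (x * 1)))) with (2 * x * g (x * (x * 1))).
    replace (x * (x * 1)) with (x ^ 2) by ring. reflexivity.
  - intros; apply Hg.
  - intros x _. split. auto_derive; auto. ring. apply c_mult. apply c_const. apply c_id.
Qed.

Lemma N_mom n N : (forall b, 0 <= b -> RInt (chi n) 0 b <= N) ->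
  forall b, 0 <= b -> 2 * F (S n) b <= N.
Proof.
  intros HN b Hb.
  assert (E : RInt (chi n) 0 (b ^ 2) = 2 * F (S n) b).
  { rewrite subst_sq by apply chi_cont. unfold F. rewrite <- RInt_scal_R by apply mom_ex.
    apply RInt_ext. intros x Hx. rewrite Rmin_left, Rmax_right in Hx by lra.
    unfold chi, mom. rewrite sqrt_pow2 by lra. simpl. ring. }
  rewrite <- E. apply HN. apply pow_le; auto.
Qed.

Lemma exp_y_bound y : 0 < y -> exp (- y) <= exp (-1) / y.
Proof.
  intros Hy. pose proof (exp_ineq1_le (y - 1)).
  assert (y * exp (-y) <= exp (-1)).
  { replace (exp (-1)) with (exp (y - 1) * exp (-y)) by (rewrite <- exp_plus; f_equal; ring).
    apply Rmult_le_compat_r. left; apply exp_pos. lra. }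
  apply Rle_trans with ((y * exp (- y)) / y). right; field; lra.
  unfold Rdiv; apply Rmult_le_compat_r; [left; apply Rinv_0_lt_compat; auto | auto].
Qed.

Definition Kp (delta t : R) := exp (- delta ^ 2 / 2) * exp (-1) / (sqrt (2 * PI) * delta ^ 2 * t).

Lemma pointwise_upper n delta q w : 0 < delta -> 1 < q -> 0 < w ->
  2 * w * (chi n (w ^ 2) * h2 delta (sqrt (q ^ 2 - 1)) (w ^ 2)) <=
  2 * Kp delta (sqrt (q ^ 2 - 1)) * (w ^ n * exp (- q ^ 2 * w ^ 2 / 2)).
Proof.
  intros Hd Hq Hw. set (t := sqrt (q ^ 2 - 1)).
  assert (Ht : 0 < t) by (apply sqrt_lt_R0; nra).
  assert (Ht2 : t ^ 2 = q ^ 2 - 1) by (unfold t; rewrite pow2_sqrt; nra).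
  unfold chi, h2. rewrite sqrt_pow2 by lra.
  assert (HT : T (delta + w * t) <= exp (- delta ^ 2 / 2) * exp (-1) * exp (- t ^ 2 * w ^ 2 / 2) / (sqrt (2 * PI) * delta ^ 2 * t * w)).
  { eapply Rle_trans. apply T_tail. nra.
    unfold phi.
    replace (exp (- (delta + w * t) ^ 2 / 2)) with (exp (- delta ^ 2 / 2) * exp (- (delta * t * w)) * exp (- t ^ 2 * w ^ 2 / 2))
      by (rewrite <- !exp_plus; apply f_equal; field).
    pose proof (exp_y_bound (delta * t * w) ltac:(apply Rmult_lt_0_compat; nra)) as Ey.
    pose proof sqrt2PI_pos as Hs.
    set (A := exp (- delta ^ 2 / 2)) in *. set (B := exp (- t ^ 2 * w ^ 2 / 2)) in *.
    set (C := exp (- (delta * t * w))) in *. set (D := exp (-1)) in *.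
    assert (0 < A) by apply exp_pos. assert (0 < B) by apply exp_pos. assert (0 < C) by apply exp_pos.
    apply Rle_trans with (A * C * B / sqrt (2 * PI) / delta).
    - unfold Rdiv. apply Rmult_le_compat_l. apply Rmult_le_pos; [|left; apply Rinv_0_lt_compat; auto]. 
      apply Rmult_le_pos; [apply Rmult_le_pos|]; lra.
      apply Rinv_le_contravar; nra.
    - replace (A * D * B / (sqrt (2 * PI) * delta ^ 2 * t * w)) with (A * (D / (delta * t * w)) * B / sqrt (2 * PI) / delta)
        by (field; repeat split; nra).
      unfold Rdiv. apply Rmult_le_compat_r. left; apply Rinv_0_lt_compat; auto.
      apply Rmult_le_compat_r. left; apply Rinv_0_lt_compat; auto.
      apply Rmult_le_compat_r. lra. apply Rmult_le_compat_l. lra. apply Ey. }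
  unfold Kp. fold t.
  replace (exp (- q ^ 2 * w ^ 2 / 2)) with (exp (- w ^ 2 / 2) * exp (- t ^ 2 * w ^ 2 / 2))
    by (rewrite <- exp_plus; f_equal; rewrite Ht2; field).
  assert (Hwn : 0 <= w ^ n) by (apply pow_le; lra).
  assert (0 < exp (- w ^ 2 / 2)) by apply exp_pos.
  set (X := exp (- delta ^ 2 / 2) * exp (-1) * exp (- t ^ 2 * w ^ 2 / 2) / (sqrt (2 * PI) * delta ^ 2 * t * w)) in *.
  apply Rle_trans with (2 * w * (w ^ n * exp (- w ^ 2 / 2) * X)).
  - apply Rmult_le_compat_l. lra. apply Rmult_le_compat_l. apply Rmult_le_pos; lra. auto.
  - unfold X. pose proof sqrt2PI_pos. right. field. repeat split; nra.
Qed.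

Lemma scale_mom n q b : 0 < q ->
  RInt (fun w => w ^ n * exp (- q ^ 2 * w ^ 2 / 2)) 0 b = (/ q) ^ (S n) * F n (q * b).
Proof.
  intros Hq. unfold F.
  pose proof (RInt_comp_lin (V:=R_CompleteNormedModule) (mom n) q 0 0 b (mom_ex _ _ _)) as E.
  replace (q * 0 + 0) with 0 in E by ring. replace (q * b + 0) with (q * b) in E by ring.
  rewrite <- E. rewrite <- RInt_scal_R.
  - apply RInt_ext. intros x _. change (scal q (mom n (q * x + 0))) with (q * mom n (q * x + 0)).
    unfold mom. replace (q * x + 0) with (q * x) by ring. rewrite Rpow_mult_distr.
    replace (- (q * x) ^ 2 / 2) with (- q ^ 2 * x ^ 2 / 2) by field.
    assert (q ^ n <> 0) by (apply pow_nonzero; lra). rewrite <- Rinv_pow by lra. simpl. field. split; lra || auto.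
  - apply exRc. intros. apply (continuous_scal_r (K:=R_AbsRing) (V:=R_NormedModule) q (fun y => mom n (q * y + 0))).
    apply (c_comp (fun y => q * y + 0) (mom n)). apply c_plus. apply c_mult. apply c_const. apply c_id. apply c_const.
    apply mom_cont.
Qed.

Lemma F1_val b : F 1 b = 1 - exp (- b ^ 2 / 2).
Proof.
  unfold F. rewrite (isR_derive (fun w => - exp (- w ^ 2 / 2))).
  - replace (- 0 ^ 2 / 2) with 0 by field. rewrite exp_0. lra.
  - intros x _. unfold mom. auto_derive; auto.
    replace (- (x * (x * 1)) * / 2) with (- x ^ 2 / 2) by field. field.
  - intros; apply mom_cont.
Qed.

Lemma N_ge2 N : (forall b, 0 <= b -> 2 * F 1 b <= N) -> 2 <= N.
Proof.
  intros H. destruct (Rle_or_lt 2 N) as [|Hc]; auto. exfalso.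
  remember (1 - N / 2) as e eqn:He0. assert (He : 0 < e) by lra.
  set (b := sqrt (2 / e)). assert (Hb2 : b ^ 2 = 2 / e) by (unfold b; rewrite pow2_sqrt; [auto|apply Rlt_le, Rdiv_lt_0_compat; lra]).
  specialize (H b (sqrt_pos _)). rewrite F1_val in H. rewrite Hb2 in H.
  pose proof (exp_ineq1_le (1 / e)).
  assert (exp (- (2 / e) / 2) * exp (1 / e) = 1) by (rewrite <- exp_plus; replace (- (2 / e) / 2 + 1 / e) with 0 by (field; lra); apply exp_0).
  assert (0 < exp (1/e)) by apply exp_pos.
  assert (exp (- (2 / e) / 2) < e).
  { assert (1 < e * exp (1 / e)). { apply Rle_lt_trans with (e * (1 + 1/e)). 2:{ apply Rmult_lt_compat_l; auto.
      pose proof (exp_ineq1 (1/e) ltac:(apply Rgt_not_eq, Rdiv_lt_0_compat; lra)). lra. }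
      replace (e * (1 + 1 / e)) with (e + 1) by (field; lra). lra. }
    nra. }
  lra.
Qed.

Lemma F0_bound b : 0 <= b -> F 0 b <= 1 + exp (- 1 / 2).
Proof.
  intros Hb. assert (Hm : forall w, mom 0 w <= 1).
  { intros w. unfold mom. rewrite pow_O, Rmult_1_l. rewrite <- exp_0. apply exp_le. pose proof (pow2_ge_0 w). lra. }
  assert (Hex : 0 < exp (-1/2)) by apply exp_pos.
  destruct (Rle_or_lt b 1).
  - apply Rle_trans with (RInt (fun _ => 1) 0 b).
    apply RInt_le; [auto | apply mom_ex | apply exRc; intros; apply c_const | intros; apply Hm].
    rewrite RInt_const. change (scal (b - 0) 1) with ((b - 0) * 1). lra.
  - unfold F. rewrite <- (RInt_Ch (mom 0) 0 1 b) by apply mom_ex.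
    assert (RInt (mom 0) 0 1 <= 1).
    { apply Rle_trans with (RInt (fun _ => 1) 0 1).
      apply RInt_le; [lra | apply mom_ex | apply exRc; intros; apply c_const | intros; apply Hm].
      rewrite RInt_const. change (scal (1 - 0) 1) with ((1 - 0) * 1). lra. }
    assert (RInt (mom 0) 1 b <= RInt (mom 1) 1 b).
    { apply RInt_le; [lra | apply mom_ex | apply mom_ex | ]. intros x Hx. unfold mom. simpl.
      assert (0 < exp (- (x * (x * 1)) / 2)) by apply exp_pos. nra. }
    assert (RInt (mom 1) 1 b = exp (- 1 / 2) - exp (- b ^ 2 / 2)).
    { pose proof (RInt_Ch (mom 1) 0 1 b (mom_ex _ _ _) (mom_ex _ _ _)).
      fold (F 1 b) in H2. fold (F 1 1) in H2. rewrite !F1_val in H2.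
      replace (- 1 ^ 2 / 2) with (- 1 / 2) in H2 by field. lra. }
    assert (0 < exp (- b ^ 2 / 2)) by apply exp_pos. lra.
Qed.

Lemma ibp j b : 0 <= b -> F (S (S j)) b + b ^ (S j) * exp (- b ^ 2 / 2) = INR (S j) * F j b.
Proof.
  intros Hb.
  assert (E : RInt (fun w => INR (S j) * mom j w + (-1) * mom (S (S j)) w) 0 b = b ^ (S j) * exp (- b ^ 2 / 2)).
  { rewrite (isR_derive (fun w => w ^ (S j) * exp (- w ^ 2 / 2))).
    - simpl. rewrite Rmult_0_l, Rmult_0_l. lra.
    - intros x _. unfold mom. auto_derive; auto.
      change (match j with 0%nat => 1 | S _ => INR j + 1 end) with (INR (S j)).
      replace (- (x * (x * 1)) * / 2) with (- x ^ 2 / 2) by field. simpl. field.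
    - intros x _. apply c_plus; apply c_mult; try apply c_const; apply mom_cont. }
  rewrite (RInt_plus (V:=R_CompleteNormedModule)) in E.
  2:{ apply ex_scal_R, mom_ex. } 2:{ apply ex_scal_R, mom_ex. }
  change (plus (RInt (fun x => INR (S j) * mom j x) 0 b) (RInt (fun x => -1 * mom (S (S j)) x) 0 b))
    with (RInt (fun x => INR (S j) * mom j x) 0 b + RInt (fun x => -1 * mom (S (S j)) x) 0 b) in E.
  rewrite !RInt_scal_R in E by apply mom_ex. unfold F. lra.
Qed.

Lemma decay j b : (1 <= j)%nat -> 1 <= b -> b ^ j * exp (- b ^ 2 / 2) <= (4 * INR j) ^ j / b.
Proof.
  intros Hj Hb.
  pose proof (pow_le_exp j (b ^ 2) ltac:(apply pow_le; lra)) as P.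
  assert (Hbj : b <= b ^ j). { rewrite <- (pow_1 b) at 1. apply Rle_pow; auto. }
  assert (Hbj0 : 0 < b ^ j) by (apply pow_lt; lra).
  assert (E1 : (b ^ 2) ^ j = b ^ j * b ^ j) by (rewrite <- pow_mult; rewrite <- pow_add; f_equal; lia).
  assert (E2 : exp (b ^ 2 / 4) * exp (- b ^ 2 / 2) <= 1).
  { rewrite <- exp_plus. rewrite <- exp_0. apply exp_le. pose proof (pow2_ge_0 b). lra. }
  assert (0 < exp (- b ^ 2 / 2)) by apply exp_pos.
  assert (HC : 0 <= (4 * INR j) ^ j) by (apply pow_le; pose proof (pos_INR j); lra).
  assert (b ^ j * (b ^ j * exp (- b ^ 2 / 2)) <= (4 * INR j) ^ j).
  { rewrite <- Rmult_assoc, <- E1. apply Rle_trans with ((4 * INR j) ^ j * exp (b ^ 2 / 4) * exp (- b ^ 2 / 2)).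
    apply Rmult_le_compat_r; lra. rewrite Rmult_assoc. rewrite <- (Rmult_1_r ((4 * INR j)^j)) at 2.
    apply Rmult_le_compat_l; auto. }
  apply Rle_trans with ((4 * INR j) ^ j / b ^ j).
  - apply Rle_trans with ((b ^ j * (b ^ j * exp (- b ^ 2 / 2))) / b ^ j). right; field; lra.
    unfold Rdiv; apply Rmult_le_compat_r; [left; apply Rinv_0_lt_compat; auto | auto].
  - unfold Rdiv. apply Rmult_le_compat_l; auto. apply Rinv_le_contravar; lra.
Qed.

Lemma amgm m s w : 0 < s -> 0 <= w -> mom (S m) w <= (mom (S (S m)) w / s + s * mom m w) / 2.
Proof.
  intros Hs Hw. unfold mom. simpl.
  assert (0 <= w ^ m) by (apply pow_le; auto). assert (0 < exp (- (w * (w * 1)) / 2)) by apply exp_pos.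
  set (E := exp (- (w * (w * 1)) / 2)) in *. set (P := w ^ m) in *.
  assert (0 <= P * E * (w - s) ^ 2 / s). { apply Rmult_le_pos. apply Rmult_le_pos. nra. apply pow2_ge_0. left; apply Rinv_0_lt_compat; auto. }
  apply Rle_trans with ((w * (w * P) * E / s + s * (P * E)) / 2 - P * E * (w - s) ^ 2 / s / 2).
  right. field. lra. lra.
Qed.

Definition rho (n : nat) := match n with O => 1 + exp (-1/2) | S m => / sqrt (INR (S m)) end.

Lemma mom_bound n N : (forall b, 0 <= b -> 2 * F (S n) b <= N) ->
  forall b, 0 <= b -> F n b <= rho n * (N / 2).
Proof.
  intros HN b Hb. destruct n as [|m].
  - pose proof (N_ge2 N HN). pose proof (F0_bound b Hb). simpl. 
    assert (0 < exp (-1/2)) by apply exp_pos. nra.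
  - set (s := sqrt (INR (S m))).
    assert (Hs1 : 1 <= s). { unfold s. rewrite <- sqrt_1. apply sqrt_le_1_alt. rewrite S_INR. pose proof (pos_INR m); lra. }
    assert (Hs2 : s * s = INR (S m)) by (unfold s; apply sqrt_sqrt; apply pos_INR).
    simpl rho. fold s.
    assert (Main : forall b', 0 <= b' -> F (S m) b' <= N / 2 / s + b' ^ (S m) * exp (- b' ^ 2 / 2) / (2 * s)).
    { intros b' Hb'.
      assert (A : F (S m) b' <= (F (S (S m)) b' / s + s * F m b') / 2).
      { unfold F. apply Rle_trans with (RInt (fun w => / 2 * (/ s * mom (S (S m)) w) + / 2 * (s * mom m w)) 0 b').
        - apply RInt_le; auto. apply mom_ex. apply exRc. intros. apply c_plus; apply c_mult; try apply c_const; apply c_mult; try apply c_const; apply mom_cont.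
          intros x Hx. pose proof (amgm m s x ltac:(lra) ltac:(lra)). lra.
        - rewrite (RInt_plus (V:=R_CompleteNormedModule)).
          change (plus ?a ?c) with (a + c).
          rewrite !RInt_scal_R. lra.
          all: apply exRc; intros; repeat (first [apply mom_cont | apply c_const | apply c_mult]). }
      pose proof (ibp m b' Hb') as I. fold (INR (S m)) in I. rewrite <- Hs2 in I.
      specialize (HN b' Hb').
      assert (Fm : F m b' = (F (S (S m)) b' + b' ^ S m * exp (- b' ^ 2 / 2)) / (s * s)) by (rewrite I; field; lra).
      rewrite Fm in A.
      replace (N / 2 / s + b' ^ S m * exp (- b' ^ 2 / 2) / (2 * s)) with
        ((N / 2) / s + b' ^ S m * exp (- b' ^ 2 / 2) / (2 * s)) by ring.
      apply Rle_trans with (F (S (S m)) b' / s + b' ^ S m * exp (- b' ^ 2 / 2) / (2 * s)).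
      + apply Rle_trans with (1 := A). right. field. lra.
      + unfold Rdiv. apply Rplus_le_compat_r. apply Rmult_le_compat_r. left; apply Rinv_0_lt_compat; lra. lra. }
    assert (forall eps, 0 < eps -> F (S m) b <= / s * (N / 2) + eps).
    { intros eps Heps.
      set (C := (4 * INR (S m)) ^ (S m)).
      assert (HC : 0 <= C) by (unfold C; apply pow_le; pose proof (pos_INR (S m)); lra).
      set (b' := Rmax b (Rmax 1 (C / eps)) + 1).
      assert (Hb'1 : b <= b') by (unfold b'; pose proof (Rmax_l b (Rmax 1 (C/eps))); lra).
      assert (Hb'2 : 1 <= b') by (unfold b'; pose proof (Rmax_r b (Rmax 1 (C/eps))); pose proof (Rmax_l 1 (C/eps)); lra).
      assert (Hb'3 : C / eps < b') by (unfold b'; pose proof (Rmax_r b (Rmax 1 (C/eps))); pose proof (Rmax_r 1 (C/eps)); lra).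
      pose proof (F_mono (S m) b b' Hb Hb'1).
      pose proof (Main b' ltac:(lra)).
      pose proof (decay (S m) b' ltac:(lia) Hb'2) as D. fold C in D.
      assert (C / b' < eps). { apply (Rmult_lt_reg_r b'). lra. replace (C / b' * b') with C by (field; lra).
        pose proof (Rmult_lt_compat_r eps _ _ Heps Hb'3) as Q. replace (C / eps * eps) with C in Q by (field; lra). lra. }
      assert (0 <= b' ^ S m * exp (- b' ^ 2 / 2)) by (apply Rmult_le_pos; [apply pow_le; lra| left; apply exp_pos]).
      assert (b' ^ S m * exp (- b' ^ 2 / 2) / (2 * s) <= b' ^ S m * exp (- b' ^ 2 / 2)).
      { unfold Rdiv. rewrite <- (Rmult_1_r (b' ^ S m * exp (- b' ^ 2 / 2))) at 2. apply Rmult_le_compat_l; auto.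
        rewrite <- Rinv_1. apply Rinv_le_contravar; lra. }
      unfold Rdiv in *. lra. }
    destruct (Rle_or_lt (F (S m) b) (/ s * (N / 2))) as [|Hc]; auto.
    specialize (H ((F (S m) b - / s * (N / 2)) / 2) ltac:(lra)). lra.
Qed.

Lemma E_bound : exp (- 1 / 2) <= 16 / 25.
Proof.
  assert (H1 : exp (1/2) = exp (1/4) * exp (1/4)) by (rewrite <- exp_plus; f_equal; field).
  pose proof (exp_ineq1_le (1/4)).
  assert (H2 : exp (- 1 / 2) * exp (1 / 2) = 1) by (rewrite <- exp_plus; replace (-1/2 + 1/2) with 0 by field; apply exp_0).
  assert (25 / 16 <= exp (1/2)) by nra.
  assert (0 < exp (-1/2)) by apply exp_pos. nra.
Qed.

Lemma exp2x_bound x : 0 <= x -> 1 + 2 * x + 3 / 2 * x ^ 2 <= exp x ^ 2.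
Proof.
  intros Hx. assert (E : exp x = exp (x / 2) * exp (x / 2)) by (rewrite <- exp_plus; f_equal; field).
  pose proof (exp_ineq1_le (x / 2)).
  assert (1 + x / 2 <= exp (x/2)) by lra.
  assert (0 <= 1 + x/2) by lra.
  assert ((1 + x/2) ^ 2 <= exp (x/2) ^ 2) by (apply pow_incr; lra).
  assert ((1 + x/2) ^ 4 <= exp (x/2) ^ 4) by (apply pow_incr; lra).
  replace (exp x ^ 2) with (exp (x/2) ^ 4) by (rewrite E; ring).
  nra.
Qed.

Lemma final_num n delta x : 0 < delta -> 0 < x ->
  Kp delta (sqrt (exp x ^ 2 - 1)) * rho n <= exp (- (1 + delta ^ 2) / 2) / (2 * delta ^ 2 * sqrt (INR (n + 2)) * x).
Proof.
  intros Hd Hx.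
  set (E := exp (- 1 / 2)). assert (HE : 0 < E) by apply exp_pos. pose proof E_bound as HE2. fold E in HE2.
  assert (Ee : exp (-1) = E * E) by (unfold E; rewrite <- exp_plus; f_equal; field).
  assert (Ed : exp (- (1 + delta ^ 2) / 2) = exp (- delta ^ 2 / 2) * E) by (unfold E; rewrite <- exp_plus; f_equal; field).
  set (t := sqrt (exp x ^ 2 - 1)).
  pose proof (exp2x_bound x ltac:(lra)) as Hq.
  assert (Ht2 : t ^ 2 = exp x ^ 2 - 1) by (unfold t; rewrite pow2_sqrt; nra).
  assert (Ht : 0 < t) by (unfold t; apply sqrt_lt_R0; nra).
  assert (Htx : 3 / 2 * x ^ 2 <= t ^ 2) by nra.
  set (d := INR (n + 2)). assert (Hd2 : 2 <= d) by (unfold d; rewrite plus_INR; simpl; pose proof (pos_INR n); lra).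
  set (sd := sqrt d). assert (Hsd : sd * sd = d) by (unfold sd; apply sqrt_sqrt; lra).
  assert (Hsd0 : 0 < sd) by (unfold sd; apply sqrt_lt_R0; lra).
  set (r := rho n).
  assert (Hr : 0 < r /\ 4 * E ^ 2 * r ^ 2 * d <= 9).
  { unfold r, rho, d. destruct n as [|m].
    - change (1 + exp (-1/2)) with (1 + E). replace (INR (0 + 2)) with 2 by (simpl; ring).
      split. lra.
      assert (P1 : E * (1 + E) <= 105/100) by nra.
      assert (P2 : (E * (1 + E)) ^ 2 <= (105/100) ^ 2) by (apply pow_incr; split; nra).
      replace (4 * E ^ 2 * (1 + E) ^ 2 * 2) with (8 * (E * (1 + E)) ^ 2) by ring. lra.
    - set (s := sqrt (INR (S m))). assert (Hs : s * s = INR (S m)) by (unfold s; apply sqrt_sqrt, pos_INR).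
      assert (Hs0 : 0 < s) by (unfold s; apply sqrt_lt_R0; rewrite S_INR; pose proof (pos_INR m); lra).
      split. apply Rinv_0_lt_compat; auto.
      rewrite plus_INR. replace (INR (S m) + INR 2) with (s * s + 2) by (rewrite Hs; simpl; ring).
      replace (4 * E ^ 2 * (/ s) ^ 2 * (s * s + 2)) with (4 * E ^ 2 * (1 + 2 / (s * s))) by (field; lra).
      assert (1 <= s * s) by (rewrite Hs, S_INR; pose proof (pos_INR m); lra).
      assert (2 / (s * s) <= 2). { unfold Rdiv. rewrite <- (Rmult_1_r 2) at 2. apply Rmult_le_compat_l. lra.
        rewrite <- Rinv_1. apply Rinv_le_contravar; lra. }
      assert (E ^ 2 <= (16/25) ^ 2) by (apply pow_incr; lra). nra. }
  destruct Hr as [Hr0 Hr].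
  assert (Hpi : 3 < PI) by (pose proof PI2_3_2; lra).
  assert (Hs2pi : sqrt (2 * PI) * sqrt (2 * PI) = 2 * PI) by (apply sqrt_sqrt; lra).
  assert (Hs2pi0 : 0 < sqrt (2 * PI)) by apply sqrt2PI_pos.
  assert (Key : 2 * E * r * sd * x <= sqrt (2 * PI) * t).
  { assert (0 <= 2 * E * r * sd * x) by (repeat apply Rmult_le_pos; lra).
    assert ((2 * E * r * sd * x) ^ 2 <= (sqrt (2 * PI) * t) ^ 2).
    { replace ((2 * E * r * sd * x) ^ 2) with (4 * E ^ 2 * r ^ 2 * d * x ^ 2) by (rewrite <- Hsd; ring).
      replace ((sqrt (2 * PI) * t) ^ 2) with (sqrt (2 * PI) * sqrt (2 * PI) * t ^ 2) by ring. rewrite Hs2pi.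
      assert (0 <= x ^ 2) by (apply pow_le; lra). nra. }
    assert (0 < sqrt (2 * PI) * t) by (apply Rmult_lt_0_compat; auto). nra. }
  unfold Kp. fold t. rewrite Ee, Ed. fold r. fold d. fold sd.
  assert (0 < exp (- delta ^ 2 / 2)) by apply exp_pos.
  set (A := exp (- delta ^ 2 / 2)).
  apply Rle_trans with (A * E / (2 * delta ^ 2 * sd * x) * (2 * E * r * sd * x / (sqrt (2 * PI) * t))).
  - right. field. repeat split; nra.
  - rewrite <- (Rmult_1_r (A * E / (2 * delta ^ 2 * sd * x))) at 2. apply Rmult_le_compat_l.
    assert (0 < delta ^ 2) by (apply pow_lt; lra).
    apply Rlt_le, Rdiv_lt_0_compat; [apply Rmult_lt_0_compat; auto | repeat apply Rmult_lt_0_compat; lra].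
    apply Rmult_le_reg_r with (sqrt (2 * PI) * t). nra. unfold Rdiv. rewrite Rmult_assoc, Rinv_l by nra. lra.
Qed.

Lemma Rpower_q (k p : R) (m : nat) : 1 <= k -> 0 < p ->
  Rpower k (- INR m / p) = (/ Rpower k (1 / p)) ^ m.
Proof.
  intros Hk Hp. replace (- INR m / p) with (1 / p * - INR m) by (field; lra).
  rewrite <- Rpower_mult. rewrite Rpower_Ropp. rewrite Rpower_pow.
  rewrite Rinv_pow. auto. unfold Rpower. apply Rgt_not_eq, exp_pos. unfold Rpower; apply exp_pos.
Qed.

Theorem proposition1 (d : nat) (hd : (2 <= d)%nat) (delta p : R)
  (hdelta : 0 < delta) (hp : 0 < p) (k : nat) (hk : (1 <= k)%nat) :
  exists l1 l2 : R,
    is_prob d (fun z u => / 4 * z ^ 2 >= u /\ u >= delta ^ 2) l1 /\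
    is_prob d (fun z u =>
      delta + sqrt u * sqrt (Rpower (INR k) (2 / p) - 1) < z) l2 /\
    / 2 * l1 * Rpower (INR k) (- INR d / p) <= l2 /\
    ((2 <= k)%nat ->
      l2 <= exp (- (1 + delta ^ 2) / 2) * p / (2 * delta ^ 2 * sqrt (INR d))
            * (Rpower (INR k) ((1 - INR d) / p) / ln (INR k))).
Proof.
  assert (exists n, d = (n + 2)%nat) as [n ->] by (exists (d - 2)%nat; lia).
  assert (Hk1 : 1 <= INR k) by (apply le_INR in hk; simpl in hk; lra).
  set (q := Rpower (INR k) (1 / p)).
  assert (Hq0 : 0 < q) by (unfold q, Rpower; apply exp_pos).
  assert (Hq1 : 1 <= q).
  { unfold q. pose proof (Rle_Rpower (INR k) 0 (1 / p) Hk1 ltac:(apply Rlt_le, Rdiv_lt_0_compat; lra)) as R.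
    rewrite Rpower_O in R by lra. auto. }
  assert (Hq2 : Rpower (INR k) (2 / p) = q ^ 2).
  { unfold q. rewrite <- Rpower_pow by (unfold Rpower; apply exp_pos). rewrite Rpower_mult. f_equal. simpl. field. lra. }
  set (c := sqrt (Rpower (INR k) (2 / p) - 1)).
  assert (Hc : c = sqrt (q ^ 2 - 1)) by (unfold c; rewrite Hq2; auto).
  destruct (N_ex n) as [N [HN [HN0 HNb]]].
  destruct (I1_ex n N delta HN HNb hdelta) as [I1 [HI1 HI1b]].
  destruct (I2_ex n N delta c HN HNb ltac:(lra) (sqrt_pos _)) as [I2 [HI2 HI2b]].
  exists (I1 / N), (I2 / N).
  split.
  { exists N, (h1 delta), I1. rewrite chisq_chi.
    refine (conj HN (conj HN0 (conj _ (conj HI1 eq_refl)))).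
    intros u Hu. apply inner_h1; auto. }
  split.
  { exists N, (h2 delta c), I2. rewrite chisq_chi.
    refine (conj HN (conj HN0 (conj _ (conj HI2 eq_refl)))).
    intros u Hu. apply inner_h2. }
  split.
  { rewrite Hc in HI2. pose proof (lower n I1 I2 delta q hdelta Hq1 HI1 HI2) as L.
    rewrite Rpower_q by lra. fold q.
    replace (/ 2 * (I1 / N) * (/ q) ^ (n + 2)) with ((/ 2 * (/ q) ^ (n + 2) * I1) / N) by (field; lra).
    unfold Rdiv. apply Rmult_le_compat_r. left; apply Rinv_0_lt_compat; auto. auto. }
  intros Hk2.
  assert (Hk2' : 1 < INR k) by (apply le_INR in Hk2; simpl in Hk2; lra).
  assert (Hq : 1 < q).
  { unfold q. pose proof (Rpower_lt (INR k) 0 (1 / p) Hk2' ltac:(apply Rdiv_lt_0_compat; lra)) as R.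
    rewrite Rpower_O in R by lra. auto. }
  set (x := ln q).
  assert (Hx : 0 < x) by (unfold x; rewrite <- ln_1; apply ln_increasing; lra).
  assert (Hqx : q = exp x) by (unfold x; rewrite exp_ln; auto).
  assert (Hlnk : ln (INR k) = p * x).
  { unfold x, q. rewrite ln_Rpower. field. lra. }
  assert (Hpow : Rpower (INR k) ((1 - INR (n + 2)) / p) = (/ q) ^ (S n)).
  { replace ((1 - INR (n + 2)) / p) with (- INR (S n) / p).
    rewrite Rpower_q by lra. auto. rewrite plus_INR, S_INR. simpl. field. lra. }
  rewrite Hpow, Hlnk.
  set (K := Kp delta (sqrt (q ^ 2 - 1))).
  assert (HK : 0 < K).
  { unfold K, Kp. apply Rdiv_lt_0_compat. apply Rmult_lt_0_compat; apply exp_pos.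
    apply Rmult_lt_0_compat; [apply Rmult_lt_0_compat; [apply sqrt2PI_pos| apply pow_lt; lra] | apply sqrt_lt_R0; nra]. }
  assert (Hrho : 0 <= rho n).
  { destruct n. simpl. pose proof (exp_pos (-1/2)); lra. unfold rho. left; apply Rinv_0_lt_compat, sqrt_lt_R0. apply lt_0_INR; lia. }
  assert (Hiq : 0 < (/ q) ^ S n) by (apply pow_lt, Rinv_0_lt_compat; lra).
  assert (UB : I2 <= K * (/ q) ^ (S n) * rho n * N).
  { apply int_pos_ub with (f := fun u => chi n u * h2 delta c u); auto. intros B HB.
    assert (EB : B = sqrt B ^ 2) by (rewrite pow2_sqrt; auto). rewrite EB.
    set (b := sqrt B). assert (Hb : 0 <= b) by apply sqrt_pos.
    rewrite subst_sq.
    2:{ intros u. apply c_mult. apply chi_cont. apply h2_cont. }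
    apply Rle_trans with (RInt (fun w => 2 * K * (w ^ n * exp (- q ^ 2 * w ^ 2 / 2))) 0 b).
    - apply RInt_le; auto.
      + apply exRc. intros. apply c_mult. apply c_mult. apply c_const. apply c_id.
        apply (c_comp (fun w => w ^ 2) (fun u => chi n u * h2 delta c u)). apply c_pow, c_id.
        apply c_mult. apply chi_cont. apply h2_cont.
      + apply exRc. intros. apply c_mult. apply c_const. apply c_mult. apply c_pow, c_id.
        apply c_exp, c_div, c_mult. apply c_const. apply c_pow, c_id.
      + intros w Hw. rewrite Hc. unfold K. apply pointwise_upper; lra.
    - rewrite RInt_scal_R. rewrite scale_mom by lra.
      pose proof (mom_bound n N (N_mom n N HNb) (q * b) ltac:(nra)) as MB.
      apply Rle_trans with (2 * K * ((/ q) ^ S n * (rho n * (N / 2)))).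
      + apply Rmult_le_compat_l. lra. apply Rmult_le_compat_l. lra. auto.
      + right. field.
      + apply exRc. intros. apply c_mult. apply c_pow, c_id.
        apply c_exp, c_div, c_mult. apply c_const. apply c_pow, c_id. }
  pose proof (final_num n delta x hdelta Hx) as FN. rewrite <- Hqx in FN. fold K in FN.
  apply Rle_trans with (K * rho n * (/ q) ^ S n).
  - apply Rmult_le_reg_r with N; auto. replace (I2 / N * N) with I2 by (field; lra). lra.
  - replace (exp (- (1 + delta ^ 2) / 2) * p / (2 * delta ^ 2 * sqrt (INR (n + 2))) * ((/ q) ^ S n / (p * x)))
      with (exp (- (1 + delta ^ 2) / 2) / (2 * delta ^ 2 * sqrt (INR (n + 2)) * x) * (/ q) ^ S n).
    apply Rmult_le_compat_r; lra.
    assert (0 < sqrt (INR (n + 2))) by (apply sqrt_lt_R0; rewrite plus_INR; simpl; pose proof (pos_INR n); lra).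
    field. repeat split; try lra.
Qed.
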